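(* Let $G$ be a connected graph with root $x_0$, let $\lambda,k\ge1$ and $N\in\mathbb N$. Then taking the $(N,1)$-skeleton of the skeleton $G_{\lambda,k}$ (rooted at the block of $x_0$) yields the skeleton $G_{N\lambda,k}$ of $G$: that is, $G_{(\lambda,k)_{(N,1)}}=G_{N\lambda,k}$, in the sense that two vertices $x,y$ of $G$ are sent to the same vertex by the natural map $G\to G_{N\lambda,k}$ iff they are sent to the same vertex by the composite natural map $G\to G_{\lambda,k}\to G_{(\lambda,k)_{(N,1)}}$, and the edges correspond accordingly.
   Context: $d$ is the graph metric. A set $X$ of vertices is $k$-connected if any two of its points are joined by a finite sequence in $X$ with consecutive distances $\le k$. Skeleton $G_{\lambda,k}$ of a connected graph $G$ (root $x_0\in V(G)$, scale $\lambda\ge1$, connectivity $k\ge1$): layers $A_{N,\lambda}=\{x: N\lambda<d(x,x_0)\le(N+1)\lambda\}$, $N\in\mathbb Z$; blocks are the maximal $k$-connected subsets of layers (distances in $G$); $G_{\lambda,k}$ has a vertex per block and an edge between two blocks iff an edge of $G$ joins a vertex of one to a vertex of the other. The natural map sends each vertex to its block. $G_{(\lambda,k)_{(\lambda',k')}}$ denotes the $(\lambda',k')$-skeleton of the graph $G_{\lambda,k}$ (with its own graph metric), rooted at the block containing $x_0$. *)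

(* Defs.v *)
From Stdlib Require Import Reals ZArith.
Open Scope R_scope.

Inductive walk {V : Type} (adj : V -> V -> Prop) : V -> V -> nat -> Prop :=
| walk0 : forall x, walk adj x x 0
| walkS : forall x y z n, adj x y -> walk adj y z n -> walk adj x z (S n).

Definition is_dist {V : Type} (adj : V -> V -> Prop) (x y : V) (n : nat) : Prop :=
  walk adj x y n /\ (forall m, walk adj x y m -> (n <= m)%nat).

Definition layer {V : Type} (adj : V -> V -> Prop) (x0 : V) (lam : R) (N : Z)
  (x : V) : Prop :=
  exists n, is_dist adj x x0 n /\ IZR N * lam < INR n /\ INR n <= (IZR N + 1) * lam.

Definition close {V : Type} (adj : V -> V -> Prop) (k : R) (x y : V) : Prop :=
  exists m, walk adj x y m /\ INR m <= k.

Inductive kchain {V : Type} (adj : V -> V -> Prop) (k : R) (X : V -> Prop)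
  : V -> V -> Prop :=
| kchain0 : forall x, X x -> kchain adj k X x x
| kchainS : forall x z y, X x -> close adj k x z -> kchain adj k X z y ->
    kchain adj k X x y.

Definition kconnected {V : Type} (adj : V -> V -> Prop) (k : R) (X : V -> Prop)
  : Prop :=
  forall x y, X x -> X y -> kchain adj k X x y.

Definition is_block {V : Type} (adj : V -> V -> Prop) (x0 : V) (lam k : R)
  (B : V -> Prop) : Prop :=
  exists N : Z,
    (exists x, B x) /\
    (forall x, B x -> layer adj x0 lam N x) /\
    kconnected adj k B /\
    (forall B' : V -> Prop,
        (forall x, B x -> B' x) ->
        (forall x, B' x -> layer adj x0 lam N x) ->
        kconnected adj k B' ->
        forall x, B' x -> B x).

Definition skel_vertex {V : Type} (adj : V -> V -> Prop) (x0 : V) (lam k : R)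
  : Type := { B : V -> Prop | is_block adj x0 lam k B }.

Definition skel_adj {V : Type} (adj : V -> V -> Prop) (x0 : V) (lam k : R)
  (b b' : skel_vertex adj x0 lam k) : Prop :=
  b <> b' /\
  exists x y, proj1_sig b x /\ proj1_sig b' y /\ adj x y.

(* Main.v *)
Require Import Defs.
From Stdlib Require Import Reals ZArith Lia Lra Classical FunctionalExtensionality PropExtensionality ProofIrrelevance ClassicalEpsilon.
Open Scope R_scope.

Section Gen.
Variable V : Type.
Variable adj : V -> V -> Prop.
Hypothesis Hsym : forall x y, adj x y -> adj y x.

Lemma walk_snoc : forall x y n, walk adj x y n -> forall z, adj y z -> walk adj x z (S n).
Proof.
  intros x y n H; induction H as [x|x y z n Ha Hw IH]; intros w Hw'.
  - apply walkS with w; [exact Hw' | constructor].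
  - apply walkS with y; auto.
Qed.

Lemma walk_sym : forall x y n, walk adj x y n -> walk adj y x n.
Proof.
  intros x y n H; induction H as [x|x y z n Ha Hw IH].
  - constructor.
  - apply walk_snoc with y; auto.
Qed.

Lemma is_dist_unique : forall x y n m, is_dist adj x y n -> is_dist adj x y m -> n = m.
Proof.
  intros x y n m [H1 H2] [H3 H4]. specialize (H2 m H3). specialize (H4 n H1). lia.
Qed.

Lemma close_sym : forall k x y, close adj k x y -> close adj k y x.
Proof. intros k x y [m [H1 H2]]. exists m; split; auto. apply walk_sym; auto. Qed.

Lemma kchain_l : forall k X x y, kchain adj k X x y -> X x.
Proof. intros k X x y H; destruct H; auto. Qed.

Lemma kchain_r : forall k X x y, kchain adj k X x y -> X y.
Proof. intros k X x y H; induction H; auto. Qed.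

Lemma kchain_trans : forall k X x y z, kchain adj k X x y -> kchain adj k X y z -> kchain adj k X x z.
Proof.
  intros k X x y z H; induction H as [x Hx| x w y Hx Hc Hk IH]; intros H2; auto.
  apply kchainS with w; auto.
Qed.

Lemma kchain_mono : forall k (X Y : V -> Prop), (forall z, X z -> Y z) ->
  forall x y, kchain adj k X x y -> kchain adj k Y x y.
Proof.
  intros k X Y HXY x y H; induction H as [x Hx| x w y Hx Hc Hk IH].
  - constructor; auto.
  - apply kchainS with w; auto.
Qed.

Lemma kchain_sym : forall k X x y, kchain adj k X x y -> kchain adj k X y x.
Proof.
  intros k X x y H; induction H as [x Hx| x w y Hx Hc Hk IH].
  - constructor; auto.
  - apply kchain_trans with w; auto.
    apply kchainS with x. eapply kchain_l; eauto. apply close_sym; auto. constructor; auto.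
Qed.

Lemma kchain_restrict : forall k X x y, kchain adj k X x y ->
  kchain adj k (fun w => kchain adj k X x w) x y.
Proof.
  intros k X x y H; induction H as [x Hx| x w y Hx Hc Hk IH].
  - constructor. constructor; auto.
  - apply kchainS with w; auto. constructor; auto.
    revert IH. apply kchain_mono. intros v Hv. apply kchainS with w; auto.
Qed.

Section Blocks.
Variable x0 : V.
Variables lam k : R.
Hypothesis Hlam : 0 < lam.

Lemma layer_unique : forall M M' x, layer adj x0 lam M x -> layer adj x0 lam M' x -> M = M'.
Proof.
  intros M M' x [n [Hn [H1 H2]]] [n' [Hn' [H3 H4]]].
  rewrite <- (is_dist_unique _ _ _ _ Hn Hn') in *.
  assert (A : (M < M' + 1)%Z).
  { apply lt_IZR. rewrite plus_IZR. apply Rmult_lt_reg_r with lam; auto. lra. }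
  assert (B : (M' < M + 1)%Z).
  { apply lt_IZR. rewrite plus_IZR. apply Rmult_lt_reg_r with lam; auto. lra. }
  lia.
Qed.

Definition blk (x y : V) : Prop :=
  exists M, layer adj x0 lam M x /\ kchain adj k (layer adj x0 lam M) x y.

Lemma blk_refl : forall M x, layer adj x0 lam M x -> blk x x.
Proof. intros M x H. exists M; split; auto. constructor; auto. Qed.

Lemma blk_layer : forall x y, blk x y -> exists M, layer adj x0 lam M x /\ layer adj x0 lam M y.
Proof. intros x y [M [H1 H2]]. exists M; split; auto. eapply kchain_r; eauto. Qed.

Lemma blk_sym : forall x y, blk x y -> blk y x.
Proof.
  intros x y [M [H1 H2]]. exists M; split. eapply kchain_r; eauto. apply kchain_sym; auto.
Qed.

Lemma blk_trans : forall x y z, blk x y -> blk y z -> blk x z.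
Proof.
  intros x y z [M [H1 H2]] [M' [H3 H4]].
  assert (M = M') by (apply layer_unique with y; auto; eapply kchain_r; eauto). subst.
  exists M'; split; auto. eapply kchain_trans; eauto.
Qed.

Lemma blk_chain : forall x w, blk x w -> kchain adj k (blk x) x w.
Proof.
  intros x w [M [H1 H2]]. apply kchain_restrict in H2. revert H2. apply kchain_mono.
  intros v Hv. exists M; auto.
Qed.

Lemma blk_is_block : forall M x, layer adj x0 lam M x -> is_block adj x0 lam k (blk x).
Proof.
  intros M x Hx. exists M. split; [|split; [|split]].
  - exists x. eapply blk_refl; eauto.
  - intros y Hy. destruct (blk_layer _ _ Hy) as [M' [H1 H2]].
    rewrite (layer_unique _ _ _ Hx H1); auto.
  - intros y z Hy Hz. apply kchain_trans with x.
    + apply kchain_sym. apply blk_chain; auto.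
    + apply blk_chain; auto.
  - intros B' Hsub Hlay Hkc y Hy. exists M; split; auto.
    assert (Hx' : B' x) by (apply Hsub; eapply blk_refl; eauto).
    specialize (Hkc x y Hx' Hy). revert Hkc. apply kchain_mono. auto.
Qed.

Lemma block_char : forall B, is_block adj x0 lam k B -> forall p, B p -> forall q, B q <-> blk p q.
Proof.
  intros B [N [Hne [HL [Hkc Hmax]]]] p Hp q. split.
  - intros Hq. exists N; split; auto. specialize (Hkc p q Hp Hq). revert Hkc.
    apply kchain_mono; auto.
  - intros Hq. apply Hmax with (B' := fun z => B z \/ blk p z); auto.
    + intros z [Hz|Hz]; auto. destruct (blk_layer _ _ Hz) as [M [H1 H2]].
      rewrite (layer_unique _ _ _ (HL p Hp) H1); auto.
    + assert (Hc : forall u, B u \/ blk p u -> kchain adj k (fun z => B z \/ blk p z) p u).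
      { intros u [Hu|Hu].
        - specialize (Hkc p u Hp Hu). revert Hkc. apply kchain_mono; auto.
        - apply blk_chain in Hu. revert Hu. apply kchain_mono; auto. }
      intros u v Hu Hv. apply kchain_trans with p; auto. apply kchain_sym; auto.
Qed.

Lemma sv_eq : forall (c1 c2 : skel_vertex adj x0 lam k) p q,
  proj1_sig c1 p -> proj1_sig c2 q -> (c1 = c2 <-> blk p q).
Proof.
  intros c1 c2 p q H1 H2. split.
  - intros E; subst. apply (block_char _ (proj2_sig c2) p H1 q); auto.
  - intros Hpq. destruct c1 as [B1 HB1], c2 as [B2 HB2]; simpl in *.
    assert (B1 = B2).
    { apply functional_extensionality; intros z. apply propositional_extensionality.
      rewrite (block_char _ HB1 p H1 z), (block_char _ HB2 q H2 z).
      split; intros; [apply blk_trans with p; auto; apply blk_sym; auto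
                     | apply blk_trans with q; auto]. }
    subst. f_equal. apply proof_irrelevance.
Qed.

Lemma sv_in : forall (c : skel_vertex adj x0 lam k), exists p, proj1_sig c p.
Proof. intros [B HB]; simpl; destruct HB as [N [H _]]; auto. Qed.

Lemma skel_adj_sym : forall b b', skel_adj adj x0 lam k b b' -> skel_adj adj x0 lam k b' b.
Proof.
  intros b b' [Hne [x [y [H1 [H2 H3]]]]]. split; auto. exists y, x; auto.
Qed.

End Blocks.
End Gen.


Lemma min_nat (P : nat -> Prop) : (exists n, P n) -> exists n, P n /\ forall m, P m -> (n <= m)%nat.
Proof.
  intros [n Hn]. apply NNPP; intros Hno.
  assert (A : forall n m, (m <= n)%nat -> ~ P m).
  { induction n0 as [|n0 IH]; intros m Hm HP.
    - apply Hno. exists m. split; auto. intros; lia.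
    - destruct (Nat.le_gt_cases m n0) as [H|H]. apply (IH m H HP).
      apply Hno. exists m; split; auto. intros m' Hm'.
      destruct (Nat.le_gt_cases m m'); auto. exfalso. apply (IH m'); auto; lia. }
  apply (A n n); auto.
Qed.

Section Main.
Variable V : Type.
Variable adj : V -> V -> Prop.
Variable x0 : V.
Variables lam k : R.
Variable N : nat.
Hypothesis Hsym : forall x y, adj x y -> adj y x.
Hypothesis Hconn : forall x y, exists n, walk adj x y n.
Hypothesis Hlam : 1 <= lam.
Hypothesis Hk : 1 <= k.
Hypothesis HN : (1 <= N)%nat.
Variable b0 : skel_vertex adj x0 lam k.
Hypothesis Hb0 : proj1_sig b0 x0.

Lemma dist_ex : forall x, exists n, is_dist adj x x0 n.
Proof. intros x. apply (min_nat (fun n => walk adj x x0 n)). apply Hconn. Qed.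

Definition D (x : V) : nat := proj1_sig (constructive_indefinite_description _ (dist_ex x)).
Lemma D_spec : forall x, is_dist adj x x0 (D x).
Proof. intros x. unfold D. destruct constructive_indefinite_description; auto. Qed.

Lemma D_adj : forall x y, adj x y -> (D x <= D y + 1)%nat.
Proof.
  intros x y H. destruct (D_spec x) as [_ Hm]. destruct (D_spec y) as [Hw _].
  rewrite Nat.add_comm. apply Hm. apply walkS with y; auto.
Qed.

Lemma D_adjR : forall x y, adj x y -> INR (D x) <= INR (D y) + 1.
Proof. intros x y H. rewrite <- S_INR. apply le_INR. pose proof (D_adj x y H); lia. Qed.

Lemma layer_iff : forall l M x, layer adj x0 l M x <-> (IZR M * l < INR (D x) <= (IZR M + 1) * l).
Proof.
  intros l M x; split.
  - intros [n [Hn H]]. rewrite (is_dist_unique _ _ _ _ _ _ (D_spec x) Hn). auto.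
  - intros H. exists (D x); split; auto. apply D_spec.
Qed.

Definition lidx (l : R) (x : V) : Z := (- up (- (INR (D x) / l)))%Z.

Lemma lidx_spec : forall l x, 0 < l -> layer adj x0 l (lidx l x) x.
Proof.
  intros l x Hl. apply layer_iff. unfold lidx. set (r := INR (D x) / l).
  destruct (archimed (- r)) as [A B]. rewrite opp_IZR.
  assert (E : INR (D x) = r * l) by (unfold r; field; lra).
  rewrite E. split.
  - apply Rmult_lt_compat_r; auto. lra.
  - apply Rmult_le_compat_r; lra.
Qed.

Lemma lidx_unique : forall l M x, 0 < l -> layer adj x0 l M x -> M = lidx l x.
Proof. intros l M x Hl H. apply (layer_unique V adj x0 l Hl M _ x H (lidx_spec l x Hl)). Qed.

Lemma Hlam0 : 0 < lam.
Proof. lra. Qed.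

Lemma INRN1 : 1 <= INR N.
Proof. replace 1 with (INR 1) by reflexivity. apply le_INR; auto. Qed.

Lemma HNl : 0 < INR N * lam.
Proof. pose proof INRN1. nra. Qed.

Notation L1 := (lidx lam).

Lemma Rlt_Z : forall l a b, 0 < l -> IZR a * l < IZR b * l -> (a < b)%Z.
Proof. intros l a b Hl H. apply lt_IZR. apply Rmult_lt_reg_r with l; auto. Qed.

Lemma Rle_Z : forall l a b, 0 < l -> (a <= b)%Z -> IZR a * l <= IZR b * l.
Proof. intros l a b Hl H. apply Rmult_le_compat_r; [lra|]. apply IZR_le; auto. Qed.

Lemma L1_bounds : forall x, IZR (L1 x) * lam < INR (D x) <= IZR (L1 x + 1) * lam.
Proof. intros x. rewrite plus_IZR. apply layer_iff. apply lidx_spec, Hlam0. Qed.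

Lemma adj_lidx : forall x y, adj x y -> (L1 x <= L1 y + 1)%Z.
Proof.
  intros x y H. pose proof (L1_bounds x). pose proof (L1_bounds y). pose proof (D_adjR x y H).
  assert (L1 x < L1 y + 2)%Z; [|lia].
  apply (Rlt_Z lam); [apply Hlam0|]. rewrite !plus_IZR in *. lra.
Qed.

Lemma D_lidx : forall x y, (D y <= D x)%nat -> (L1 y <= L1 x)%Z.
Proof.
  intros x y H. apply le_INR in H. pose proof (L1_bounds x). pose proof (L1_bounds y).
  assert (L1 y < L1 x + 1)%Z; [|lia].
  apply (Rlt_Z lam); [apply Hlam0|]. lra.
Qed.

Lemma lidx_ge : forall x, (-1 <= L1 x)%Z.
Proof.
  intros x. pose proof (L1_bounds x). pose proof (pos_INR (D x)).
  assert (-1 < L1 x + 1)%Z; [|lia]. apply (Rlt_Z lam); [apply Hlam0|]. lra.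
Qed.

Lemma lidx_x0 : L1 x0 = (-1)%Z.
Proof.
  symmetry. apply lidx_unique. apply Hlam0. apply layer_iff.
  assert (D x0 = 0%nat). { destruct (D_spec x0) as [_ H]. specialize (H 0%nat (walk0 _ _)). lia. }
  rewrite H. simpl. lra.
Qed.

Lemma D_zero : forall x, D x = 0%nat -> x = x0.
Proof. intros x H. destruct (D_spec x) as [W _]. rewrite H in W. inversion W; auto. Qed.

Definition blk1 := blk V adj x0 lam k.

Definition bv (x : V) : skel_vertex adj x0 lam k :=
  exist _ (blk1 x) (blk_is_block V adj Hsym x0 lam k Hlam0 _ x (lidx_spec lam x Hlam0)).

Lemma bv_in : forall x, proj1_sig (bv x) x.
Proof. intros x. simpl. eapply blk_refl. apply (lidx_spec lam x Hlam0). Qed.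

Lemma bv_eq : forall (b : skel_vertex adj x0 lam k) x, proj1_sig b x -> b = bv x.
Proof.
  intros b x H. apply (sv_eq V adj Hsym x0 lam k Hlam0 b (bv x) x x H (bv_in x)).
  eapply blk_refl. apply (lidx_spec lam x Hlam0).
Qed.

Lemma bv_iff : forall x y, bv x = bv y <-> blk1 x y.
Proof. intros x y. apply (sv_eq V adj Hsym x0 lam k Hlam0); apply bv_in. Qed.

Lemma blk1_lidx : forall x y, blk1 x y -> L1 x = L1 y.
Proof.
  intros x y H. destruct (blk_layer V adj x0 lam k x y H) as [M [H1 H2]].
  rewrite <- (lidx_unique _ _ _ Hlam0 H1), <- (lidx_unique _ _ _ Hlam0 H2); auto.
Qed.

Lemma in_blk1 : forall (b : skel_vertex adj x0 lam k) x y, proj1_sig b x -> proj1_sig b y -> blk1 x y.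
Proof. intros b x y Hx Hy. apply (block_char V adj Hsym x0 lam k Hlam0 _ (proj2_sig b) x Hx y); auto. Qed.

Notation sadj := (skel_adj adj x0 lam k).

Lemma sadj_lidx : forall b c, sadj b c -> forall x y, proj1_sig b x -> proj1_sig c y -> (L1 x <= L1 y + 1)%Z.
Proof.
  intros b c [_ [u [v [Hu [Hv Huv]]]]] x y Hx Hy.
  rewrite (blk1_lidx _ _ (in_blk1 b x u Hx Hu)), (blk1_lidx _ _ (in_blk1 c y v Hy Hv)).
  apply adj_lidx; auto.
Qed.

Lemma walk_lb : forall b c m, walk sadj b c m -> forall x y, proj1_sig b x -> proj1_sig c y ->
  (L1 x - L1 y <= Z.of_nat m)%Z.
Proof.
  intros b c m H; induction H as [b|b d c m Hbd Hw IH]; intros x y Hx Hy.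
  - rewrite (blk1_lidx _ _ (in_blk1 b x y Hx Hy)). lia.
  - destruct (sv_in V adj x0 lam k d) as [v Hv].
    pose proof (sadj_lidx b d Hbd x v Hx Hv). pose proof (IH v y Hv Hy). lia.
Qed.

Lemma b0_eq : b0 = bv x0.
Proof. apply bv_eq; auto. Qed.

Lemma walk_ex : forall n x, D x = n -> walk sadj (bv x) b0 (Z.to_nat (L1 x + 1)).
Proof.
  induction n as [|n IH]; intros x Hx.
  - apply D_zero in Hx. subst. rewrite lidx_x0. rewrite b0_eq. constructor.
  - destruct (D_spec x) as [W Hm]. rewrite Hx in W. inversion W as [|x' y z n' Hxy Wy]; subst.
    assert (Dy : D y = n).
    { destruct (D_spec y) as [_ Hmy]. specialize (Hmy n Wy). pose proof (D_adj x y Hxy). lia. }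
    pose proof (IH y Dy) as IHy.
    pose proof (D_lidx x y ltac:(lia)). pose proof (adj_lidx x y Hxy). pose proof (lidx_ge y).
    destruct (Z.eq_dec (L1 y) (L1 x)) as [E|E].
    + assert (bv x = bv y) as ->.
      { apply bv_iff. exists (L1 x). split. apply lidx_spec, Hlam0.
        apply kchainS with y. apply lidx_spec, Hlam0.
        exists 1%nat. split. apply walkS with y; auto. constructor. simpl; lra.
        constructor. rewrite <- E. apply lidx_spec, Hlam0. }
      rewrite <- E; auto.
    + replace (Z.to_nat (L1 x + 1)) with (S (Z.to_nat (L1 y + 1))) by lia.
      apply walkS with (bv y); auto. split.
      * intros Ebv. apply bv_iff in Ebv. apply blk1_lidx in Ebv. lia.
      * exists x, y. split; [apply bv_in|]. split; [apply bv_in|]. auto.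
Qed.

Lemma sdist : forall x, is_dist sadj (bv x) b0 (Z.to_nat (L1 x + 1)).
Proof.
  intros x. split. apply (walk_ex (D x)); auto.
  intros m Wm. pose proof (walk_lb _ _ _ Wm x x0 (bv_in x) Hb0). rewrite lidx_x0 in H.
  pose proof (lidx_ge x). lia.
Qed.


Definition slayer (P : Z) (b : skel_vertex adj x0 lam k) := layer sadj b0 (INR N) P b.
Definition inQ (Q : Z) (x : V) := (Q * Z.of_nat N <= L1 x < Q * Z.of_nat N + Z.of_nat N)%Z.
Definition biglayer (Q : Z) (x : V) := layer adj x0 (INR N * lam) Q x.

Lemma slayer_iff : forall P x, slayer P (bv x) <-> inQ P x.
Proof.
  intros P x. unfold slayer, inQ. pose proof (lidx_ge x).
  assert (E : INR (Z.to_nat (L1 x + 1)) = IZR (L1 x + 1)).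
  { rewrite INR_IZR_INZ. f_equal. lia. }
  assert (E1 : IZR P * INR N = IZR (P * Z.of_nat N)) by (rewrite mult_IZR, INR_IZR_INZ; ring).
  assert (E2 : (IZR P + 1) * INR N = IZR ((P + 1) * Z.of_nat N))
    by (rewrite mult_IZR, plus_IZR, INR_IZR_INZ; ring).
  unfold layer. split.
  - intros [n [Hn [H1 H2]]]. rewrite <- (is_dist_unique _ _ _ _ _ _ (sdist x) Hn) in H1, H2.
    rewrite E, E1 in H1. rewrite E, E2 in H2. apply lt_IZR in H1. apply le_IZR in H2. lia.
  - intros H1. exists (Z.to_nat (L1 x + 1)). split. apply sdist. rewrite E, E1, E2. split.
    apply IZR_lt; lia. apply IZR_le; lia.
Qed.

Lemma biglayer_iff : forall Q x, biglayer Q x <-> inQ Q x.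
Proof.
  intros Q x. unfold biglayer, inQ. rewrite layer_iff. pose proof (L1_bounds x).
  pose proof Hlam0 as Hl.
  replace (IZR Q * (INR N * lam)) with (IZR (Q * Z.of_nat N) * lam)
    by (rewrite mult_IZR, INR_IZR_INZ; ring).
  replace ((IZR Q + 1) * (INR N * lam)) with (IZR ((Q + 1) * Z.of_nat N) * lam)
    by (rewrite mult_IZR, plus_IZR, INR_IZR_INZ; ring).
  split.
  - intros [H1 H2].
    assert (Q * Z.of_nat N < L1 x + 1)%Z by (apply (Rlt_Z lam); lra).
    assert (L1 x < (Q + 1) * Z.of_nat N)%Z by (apply (Rlt_Z lam); lra).
    lia.
  - intros [H1 H2].
    pose proof (Rle_Z lam _ _ Hl H1). pose proof (Rle_Z lam (L1 x + 1) ((Q+1) * Z.of_nat N) Hl ltac:(lia)).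
    rewrite plus_IZR in *. split; lra.
Qed.

Lemma inQ_ex : forall x, exists Q, inQ Q x.
Proof.
  intros x. exists (L1 x / Z.of_nat N)%Z. unfold inQ.
  assert (Hn : (0 < Z.of_nat N)%Z) by lia.
  pose proof (Z.div_mod (L1 x) (Z.of_nat N) ltac:(lia)).
  pose proof (Z.mod_pos_bound (L1 x) (Z.of_nat N) Hn). lia.
Qed.

Lemma slayer_ex : forall b, exists P, slayer P b.
Proof.
  intros b. destruct (sv_in V adj x0 lam k b) as [u Hu]. rewrite (bv_eq b u Hu).
  destruct (inQ_ex u) as [Q HQ]. exists Q. apply slayer_iff; auto.
Qed.

Lemma sadj_sym : forall b c, sadj b c -> sadj c b.
Proof. apply skel_adj_sym; auto. Qed.

Lemma INRN0 : 0 < INR N.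
Proof. pose proof INRN1; lra. Qed.

Definition sblk := blk _ sadj b0 (INR N) 1.

Lemma sblk_is_block : forall b, is_block sadj b0 (INR N) 1 (sblk b).
Proof.
  intros b. destruct (slayer_ex b) as [P HP].
  apply (blk_is_block _ sadj sadj_sym b0 (INR N) 1 INRN0 P b HP).
Qed.

Definition sbv (b : skel_vertex adj x0 lam k) : skel_vertex sadj b0 (INR N) 1 :=
  exist _ (sblk b) (sblk_is_block b).

Definition bblk := blk V adj x0 (INR N * lam) k.

Lemma bblk_is_block : forall x, is_block adj x0 (INR N * lam) k (bblk x).
Proof.
  intros x. apply (blk_is_block V adj Hsym x0 _ k HNl _ x (lidx_spec _ x HNl)).
Qed.

Definition BV (x : V) : skel_vertex adj x0 (INR N * lam) k := exist _ (bblk x) (bblk_is_block x).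

Lemma small_in_big : forall P x y, blk1 x y -> inQ P x -> kchain adj k (biglayer P) x y.
Proof.
  intros P x y [M [H1 H2]] HQ. revert H2. apply kchain_mono. intros z Hz.
  apply biglayer_iff. unfold inQ in *.
  rewrite <- (lidx_unique _ _ _ Hlam0 Hz). rewrite <- (lidx_unique _ _ _ Hlam0 H1) in HQ. auto.
Qed.

Lemma close1_cases : forall b d, close sadj 1 b d -> b = d \/ sadj b d.
Proof.
  intros b d [m [W Hm]]. destruct m as [|m].
  - inversion W; auto.
  - destruct m as [|m].
    + inversion W as [|b' d' e n' Hbd Wd]; subst. inversion Wd; subst. auto.
    + exfalso. rewrite !S_INR in Hm. pose proof (pos_INR m). lra.
Qed.

Lemma close_walk : forall a v j, walk adj a v j -> INR j <= k -> close adj k a v.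
Proof. intros a v j W H. exists j; auto. Qed.

Lemma E_left : forall P b c, kchain sadj 1 (slayer P) b c ->
  forall x y, proj1_sig b x -> proj1_sig c y -> kchain adj k (biglayer P) x y.
Proof.
  intros P b c H; induction H as [b Hb | b d c Hb Hc Hkc IH]; intros x y Hx Hy.
  - apply small_in_big. apply (in_blk1 b); auto. apply slayer_iff. rewrite <- (bv_eq b x Hx); auto.
  - destruct (close1_cases b d Hc) as [E|Hbd].
    + subst. apply IH; auto.
    + destruct Hbd as [_ [u [v [Hu [Hv Huv]]]]].
      assert (Hxu : kchain adj k (biglayer P) x u).
      { apply small_in_big. apply (in_blk1 b); auto. apply slayer_iff. rewrite <- (bv_eq b x Hx); auto. }
      apply kchain_trans with u; auto.
      apply kchainS with v. eapply kchain_r; eauto.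
      apply close_walk with 1%nat. apply walkS with v; auto. constructor. simpl; lra.
      apply IH; auto.
Qed.

Definition Rq (Q : Z) (a v : V) := kchain sadj 1 (slayer Q) (bv a) (bv v).

Lemma same_block : forall M a v, layer adj x0 lam M a -> layer adj x0 lam M v -> close adj k a v -> bv a = bv v.
Proof.
  intros M a v Ha Hv Hc. apply bv_iff. exists M. split; auto.
  apply kchainS with v; auto. constructor; auto.
Qed.

Lemma Rq_eq : forall Q a v, bv a = bv v -> biglayer Q a -> Rq Q a v.
Proof.
  intros Q a v E H. unfold Rq. rewrite <- E. constructor. apply slayer_iff, biglayer_iff; auto.
Qed.

Lemma Rq_adj : forall Q u v, biglayer Q u -> biglayer Q v -> adj u v -> Rq Q u v.
Proof.
  intros Q u v Hu Hv Huv. destruct (classic (bv u = bv v)) as [E|E].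
  - apply Rq_eq; auto.
  - unfold Rq. apply kchainS with (bv v). apply slayer_iff, biglayer_iff; auto.
    exists 1%nat. split. apply walkS with (bv v). split; auto. exists u, v. split; [apply bv_in|]. split; [apply bv_in|]. auto.
    constructor. simpl; lra.
    constructor. apply slayer_iff, biglayer_iff; auto.
Qed.


Lemma Rq_trans : forall Q a b c, Rq Q a b -> Rq Q b c -> Rq Q a c.
Proof. intros. eapply kchain_trans; eauto. Qed.

Section Hard.
Variable Q : Z.
Let Lb := IZR Q * (INR N * lam).
Let Ub := (IZR Q + 1) * (INR N * lam).
Let d (u : V) := INR (D u).

Lemma big_iff : forall u, biglayer Q u <-> Lb < d u <= Ub.
Proof. intros u. unfold biglayer. rewrite layer_iff. reflexivity. Qed.

Lemma LU : Lb + lam <= Ub.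
Proof. unfold Lb, Ub. pose proof INRN1. nra. Qed.

Lemma bottom_layer : forall a, Lb < d a <= Lb + lam -> layer adj x0 lam (Q * Z.of_nat N) a.
Proof.
  intros a H. apply layer_iff. unfold Lb, d in *.
  replace (IZR (Q * Z.of_nat N)) with (IZR Q * INR N) by (rewrite mult_IZR, INR_IZR_INZ; ring).
  split; [|replace ((IZR Q * INR N + 1) * lam) with (IZR Q * (INR N * lam) + lam) by ring]; lra.
Qed.

Lemma top_layer : forall a, Ub - lam < d a <= Ub -> layer adj x0 lam ((Q + 1) * Z.of_nat N - 1) a.
Proof.
  intros a H. apply layer_iff. unfold Ub, d in *.
  replace (IZR ((Q + 1) * Z.of_nat N - 1)) with ((IZR Q + 1) * INR N - 1)
    by (rewrite minus_IZR, mult_IZR, plus_IZR, INR_IZR_INZ; ring).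
  split.
  - replace (((IZR Q + 1) * INR N - 1) * lam) with ((IZR Q + 1) * (INR N * lam) - lam) by ring. lra.
  - replace (((IZR Q + 1) * INR N - 1 + 1) * lam) with ((IZR Q + 1) * (INR N * lam)) by ring. lra.
Qed.

Lemma hard_ind : forall z u m, walk adj u z m -> biglayer Q z ->
  forall a j, biglayer Q a -> walk adj a u j -> INR (j + m) <= k ->
  (biglayer Q u -> Rq Q a u) -> (d u <= Lb -> d a <= Lb + lam) -> (Ub < d u -> Ub - lam < d a) ->
  Rq Q a z.
Proof.
  intros z u m W; induction W as [u | u v z m Huv Wv IH]; intros Hz a j Ha Wa Hj Hin Hbel Habo.
  - apply Hin; auto.
  - pose proof LU as HLU. pose proof (D_adjR u v Huv) as A1. pose proof (D_adjR v u (Hsym _ _ Huv)) as A2.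
    fold (d u) (d v) in A1, A2.
    assert (Hj1 : INR (S j + m) <= k) by (replace (S j + m)%nat with (j + S m)%nat by lia; auto).
    assert (Wa' : walk adj a v (S j)) by (apply walk_snoc with u; auto).
    assert (Hdv : ~ biglayer Q v -> d v <= Lb \/ Ub < d v).
    { intros Hn. rewrite big_iff in Hn. destruct (Rle_or_lt (d v) Lb); auto.
      destruct (Rle_or_lt (d v) Ub); auto. exfalso; apply Hn; split; auto. }
    assert (Hdu : ~ biglayer Q u -> d u <= Lb \/ Ub < d u).
    { intros Hn. rewrite big_iff in Hn. destruct (Rle_or_lt (d u) Lb); auto.
      destruct (Rle_or_lt (d u) Ub); auto. exfalso; apply Hn; split; auto. }
    assert (Hclose : INR (S j) <= k -> close adj k a v) by (intros; apply close_walk with (S j); auto).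
    assert (HSj : INR (S j) <= k).
    { apply Rle_trans with (INR (S j + m)); auto. apply le_INR; lia. }
    pose proof (proj1 (big_iff a) Ha) as Ha'.
    destruct (classic (biglayer Q u)) as [Hu|Hu]; destruct (classic (biglayer Q v)) as [Hv|Hv].
    + pose proof (proj1 (big_iff v) Hv).
      apply (IH Hz a (S j)); auto; try (intros; lra).
      intros _. apply Rq_trans with u; auto. apply Rq_adj; auto.
    + pose proof (proj1 (big_iff u) Hu).
      apply Rq_trans with u; [apply Hin; auto|]. apply (IH Hz u 1%nat); auto.
      * apply walkS with v; auto. constructor.
      * apply Rle_trans with (INR (j + S m)); auto. apply le_INR; lia.
      * intros; contradiction.
      * intros; lra.
      * intros; lra.
    + pose proof (proj1 (big_iff v) Hv).
      apply (IH Hz a (S j)); auto; try (intros; lra).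
      intros _. destruct (Hdu Hu) as [B|B].
      * pose proof (Hbel B). apply Rq_eq; auto.
        apply same_block with (Q * Z.of_nat N)%Z; auto; apply bottom_layer; lra.
      * pose proof (Habo B). apply Rq_eq; auto.
        apply same_block with ((Q + 1) * Z.of_nat N - 1)%Z; auto; apply top_layer; lra.
    + apply (IH Hz a (S j)); auto.
      * intros; contradiction.
      * intros B. destruct (Hdu Hu) as [B'|B']; [apply Hbel; auto| lra].
      * intros B. destruct (Hdu Hu) as [B'|B']; [lra | apply Habo; auto].
Qed.

Lemma hard : forall x z, biglayer Q x -> biglayer Q z -> close adj k x z -> Rq Q x z.
Proof.
  intros x z Hx Hz [m [W Hm]]. apply (hard_ind z x m W Hz x 0%nat); auto.
  - constructor.
  - intros _. apply Rq_eq; auto.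
  - intros. lra.
  - intros. lra.
Qed.
End Hard.

Lemma E_right : forall Q x y, kchain adj k (biglayer Q) x y -> Rq Q x y.
Proof.
  intros Q x y H; induction H as [x Hx | x z y Hx Hc Hkc IH].
  - apply Rq_eq; auto.
  - apply Rq_trans with z; auto. apply hard; auto. eapply kchain_l; eauto.
Qed.

Lemma E : forall x y, bblk x y <-> sblk (bv x) (bv y).
Proof.
  intros x y. split.
  - intros [Q [HQ Hc]]. exists Q. split.
    + apply slayer_iff, biglayer_iff; auto.
    + apply E_right; auto.
  - intros [P [HP Hc]]. exists P. split.
    + apply biglayer_iff, slayer_iff; auto.
    + apply (E_left P _ _ Hc); apply bv_in.
Qed.


Lemma bblk_in : forall x, bblk x x.
Proof. intros x. eapply blk_refl. apply (lidx_spec _ x HNl). Qed.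

Lemma sblk_refl : forall b, sblk b b.
Proof. intros b. destruct (slayer_ex b) as [P HP]. eapply blk_refl; eauto. Qed.

Lemma bblk_sym : forall x y, bblk x y -> bblk y x.
Proof. apply blk_sym; auto. Qed.
Lemma bblk_trans : forall x y z, bblk x y -> bblk y z -> bblk x z.
Proof. apply blk_trans; auto. apply HNl. Qed.

Lemma part1 : forall x y : V,
     (exists B, is_block adj x0 (INR N * lam) k B /\ B x /\ B y) <->
     (exists (b1 b2 : skel_vertex adj x0 lam k) C,
        is_block (skel_adj adj x0 lam k) b0 (INR N) 1 C /\
        proj1_sig b1 x /\ proj1_sig b2 y /\ C b1 /\ C b2).
Proof.
  intros x y. split.
  - intros [B [HB [Hx Hy]]].
    assert (Hxy : bblk x y) by (apply (block_char V adj Hsym x0 _ k HNl B HB x Hx y); auto).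
    apply E in Hxy.
    exists (bv x), (bv y), (sblk (bv x)). split; [apply sblk_is_block|].
    split; [apply bv_in|]. split; [apply bv_in|]. split; auto. apply sblk_refl.
  - intros [b1 [b2 [C [HC [H1 [H2 [C1 C2]]]]]]].
    assert (Hs : sblk b1 b2) by (apply (block_char _ sadj sadj_sym b0 _ 1 INRN0 C HC b1 C1 b2); auto).
    rewrite (bv_eq b1 x H1), (bv_eq b2 y H2) in Hs. apply E in Hs.
    exists (bblk x). split; [apply bblk_is_block|]. split; auto. apply bblk_in.
Qed.

Lemma BV_in : forall x, proj1_sig (BV x) x.
Proof. intros; apply bblk_in. Qed.

Lemma part2 : forall x y : V,
     (exists B B' : skel_vertex adj x0 (INR N * lam) k,
        proj1_sig B x /\ proj1_sig B' y /\ skel_adj adj x0 (INR N * lam) k B B') <->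
     (exists (b1 b2 : skel_vertex adj x0 lam k)
             (c1 c2 : skel_vertex (skel_adj adj x0 lam k) b0 (INR N) 1),
        proj1_sig b1 x /\ proj1_sig b2 y /\
        proj1_sig c1 b1 /\ proj1_sig c2 b2 /\
        skel_adj (skel_adj adj x0 lam k) b0 (INR N) 1 c1 c2).
Proof.
  intros x y. split.
  - intros [B [B' [Hx [Hy [Hne [u [w [Hu [Hw Huw]]]]]]]]].
    assert (Bxu : bblk x u) by (apply (block_char V adj Hsym x0 _ k HNl _ (proj2_sig B) x Hx u); auto).
    assert (Byw : bblk y w) by (apply (block_char V adj Hsym x0 _ k HNl _ (proj2_sig B') y Hy w); auto).
    assert (Nxy : ~ bblk x y).
    { intros Hxy. apply Hne. apply (sv_eq V adj Hsym x0 _ k HNl B B' x y Hx Hy); auto. }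
    exists (bv x), (bv y), (sbv (bv x)), (sbv (bv y)).
    split; [apply bv_in|]. split; [apply bv_in|]. split; [apply sblk_refl|]. split; [apply sblk_refl|].
    split.
    + intros Ec. apply Nxy. apply E.
      apply (sv_eq _ sadj sadj_sym b0 _ 1 INRN0 (sbv (bv x)) (sbv (bv y)) (bv x) (bv y) (sblk_refl _) (sblk_refl _)); auto.
    + exists (bv u), (bv w). split; [simpl; apply E; auto|]. split; [simpl; apply E; auto|].
      split.
      * intros Eb. apply bv_iff in Eb. apply Nxy.
        apply bblk_trans with u; auto. apply bblk_trans with w; [|apply bblk_sym; auto].
        destruct (inQ_ex u) as [P HP]. exists P. split. apply biglayer_iff; auto.
        apply small_in_big; auto.
      * exists u, w. split; [apply bv_in|]. split; [apply bv_in|]. auto.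
  - intros [b1 [b2 [c1 [c2 [H1 [H2 [Hc1 [Hc2 [Hne [e1 [e2 [He1 [He2 Hee]]]]]]]]]]]]].
    destruct Hee as [_ [u [w [Hu [Hw Huw]]]]].
    rewrite (bv_eq b1 x H1) in Hc1. rewrite (bv_eq b2 y H2) in Hc2.
    rewrite (bv_eq e1 u Hu) in He1. rewrite (bv_eq e2 w Hw) in He2.
    exists (BV x), (BV y). split; [apply BV_in|]. split; [apply BV_in|]. split.
    + intros EB. apply Hne.
      apply (sv_eq _ sadj sadj_sym b0 _ 1 INRN0 c1 c2 (bv x) (bv y) Hc1 Hc2).
      apply E. apply (sv_eq V adj Hsym x0 _ k HNl _ _ x y (BV_in x) (BV_in y)); auto.
    + exists u, w. split; [|split; auto].
      * simpl. apply E. apply (block_char _ sadj sadj_sym b0 _ 1 INRN0 _ (proj2_sig c1) (bv x) Hc1 (bv u)); auto.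
      * simpl. apply E. apply (block_char _ sadj sadj_sym b0 _ 1 INRN0 _ (proj2_sig c2) (bv y) Hc2 (bv w)); auto.
Qed.

End Main.

Theorem proposition1 (V : Type) (adj : V -> V -> Prop) (x0 : V) (lam k : R)
  (N : nat) :
  (forall x y, adj x y -> adj y x) ->
  (forall x, ~ adj x x) ->
  (forall x y, exists n, walk adj x y n) ->
  1 <= lam -> 1 <= k -> (1 <= N)%nat ->
  forall b0 : skel_vertex adj x0 lam k, proj1_sig b0 x0 ->
  (forall x y : V,
     (exists B, is_block adj x0 (INR N * lam) k B /\ B x /\ B y) <->
     (exists (b1 b2 : skel_vertex adj x0 lam k) C,
        is_block (skel_adj adj x0 lam k) b0 (INR N) 1 C /\
        proj1_sig b1 x /\ proj1_sig b2 y /\ C b1 /\ C b2)) /\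
  (forall x y : V,
     (exists B B' : skel_vertex adj x0 (INR N * lam) k,
        proj1_sig B x /\ proj1_sig B' y /\ skel_adj adj x0 (INR N * lam) k B B') <->
     (exists (b1 b2 : skel_vertex adj x0 lam k)
             (c1 c2 : skel_vertex (skel_adj adj x0 lam k) b0 (INR N) 1),
        proj1_sig b1 x /\ proj1_sig b2 y /\
        proj1_sig c1 b1 /\ proj1_sig c2 b2 /\
        skel_adj (skel_adj adj x0 lam k) b0 (INR N) 1 c1 c2)).
Proof.
  intros Hsym _ Hconn Hlam Hk HN b0 Hb0. split.
  - apply (part1 V adj x0 lam k N Hsym Hconn Hlam Hk HN b0 Hb0).
  - apply (part2 V adj x0 lam k N Hsym Hconn Hlam Hk HN b0 Hb0).
Qed.
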